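(* Let $k$ be an algebraically closed field of characteristic $0$, $d\ge3$, $n\ge2$, and let $V_n$ have basis $v_1,\dots,v_n$ with symmetric $d$-linear form $\Theta_d(v_{i_1},\dots,v_{i_d})=1$ if $i_1+\dots+i_d=(d-1)n+1$ and $0$ otherwise. Let $\mathrm{Cent}_k(n,d)=\{f\in\mathrm{End}_k(V_n):\Theta_d(fu_1,u_2,\dots,u_d)=\Theta_d(u_1,fu_2,\dots,u_d)\ \forall u_i\}$ and $\mathcal{L}(n,d)=\{L\in\mathfrak{gl}(V_n):\sum_{i=1}^d\Theta_d(u_1,\dots,L(u_i),\dots,u_d)=0\ \forall u_j\}$. Then $\dim_k\mathcal{L}(n,d)<\dim_k\mathrm{Cent}_k(n,d)=n$. *)

(* Defs.v *)
From HB Require Import structures.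
From mathcomp Require Import all_boot all_order all_algebra.
Set Implicit Arguments. Unset Strict Implicit. Unset Printing Implicit Defensive.
Import GRing.Theory.
Local Open Scope ring_scope.

(* V_n = 'cV[k]_n, basis vector v_{i+1} = delta at index i : 'I_n (0-based).
   Theta_d (u_1,...,u_d), the u's given as a family u : 'I_d -> 'cV_n, is the
   multilinear extension of Theta_d(v_{i_1},...,v_{i_d}) = [i_1+...+i_d == (d-1)n+1]
   (1-based indices), written out in coordinates. *)
Definition Theta (k : fieldType) (n d : nat) (u : 'I_d -> 'cV[k]_n) : k :=
  \sum_(i : {ffun 'I_d -> 'I_n} | ((\sum_(j < d) (i j).+1)%N == (d - 1) * n + 1)%N)
     \prod_(j < d) u j (i j) ord0.

Definition app_at (k : fieldType) (n d : nat) (f : 'M[k]_n) (p : nat)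
    (u : 'I_d -> 'cV[k]_n) : 'I_d -> 'cV[k]_n :=
  fun j => if val j == p then f *m u j else u j.

Definition in_Cent (k : fieldType) (n d : nat) (f : 'M[k]_n) : Prop :=
  forall u : 'I_d -> 'cV[k]_n, Theta (app_at f 0 u) = Theta (app_at f 1 u).

Definition in_Lie (k : fieldType) (n d : nat) (f : 'M[k]_n) : Prop :=
  forall u : 'I_d -> 'cV[k]_n, \sum_(i < d) Theta (app_at f i u) = 0.

(* Main.v *)
Require Import Defs.
From HB Require Import structures.
From mathcomp Require Import all_boot all_order all_algebra.
From mathcomp Require Import zify ring lra.
Set Implicit Arguments. Unset Strict Implicit. Unset Printing Implicit Defensive.
Import GRing.Theory.
Local Open Scope ring_scope.

Definition fupd n d (i : {ffun 'I_d -> 'I_n}) (p : 'I_d) (c : 'I_n) :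
  {ffun 'I_d -> 'I_n} := [ffun j => if j == p then c else i j].

Definition condt n d (i : {ffun 'I_d -> 'I_n}) : bool :=
  ((\sum_(j < d) (i j).+1)%N == (d - 1) * n + 1)%N.

Definition Kc (k : fieldType) n d (f : 'M[k]_n) (p : 'I_d) (i : {ffun 'I_d -> 'I_n}) : k :=
  \sum_(c < n) (condt (fupd i p c))%:R * f c (i p).

Lemma fupd_id n d (i : {ffun 'I_d -> 'I_n}) p c : fupd (fupd i p c) p (i p) = i.
Proof. by apply/ffunP => j; rewrite !ffunE; case: eqP => // ->. Qed.

Lemma fupd_at n d (i : {ffun 'I_d -> 'I_n}) p c : fupd i p c p = c.
Proof. by rewrite ffunE eqxx. Qed.

Lemma Theta_app (k : fieldType) n d (f : 'M[k]_n) (p : 'I_d) u :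
  Theta (app_at f p u) = \sum_i Kc f p i * \prod_j u j (i j) ord0.
Proof.
pose R (i : {ffun 'I_d -> 'I_n}) := \prod_(j | j != p) u j (i j) ord0.
have HR i c : R (fupd i p c) = R i.
  by apply: eq_bigr => j /negbTE hj; rewrite ffunE hj.
pose F (q : {ffun 'I_d -> 'I_n} * 'I_n) :=
  (condt q.1)%:R * f (q.1 p) q.2 * u p q.2 ord0 * R q.1.
pose h (q : {ffun 'I_d -> 'I_n} * 'I_n) := (fupd q.1 p q.2, q.1 p).
have hK : involutive h by case=> i c; rewrite /h /= fupd_id fupd_at.
transitivity (\sum_i \sum_c F (i, c)).
  rewrite /Theta big_mkcond /=.
  apply: eq_bigr => i _; rewrite /F /=.
  rewrite /condt; case: ifP => _; last by rewrite big1 // => c _; rewrite !mul0r.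
  rewrite (bigD1 p) //= /app_at eqxx mxE big_distrl /=.
  rewrite (_ : \prod_(j | j != p) _ = R i); last first.
    apply: eq_bigr => j hj.
    have -> : (val j == val p) = false by rewrite (inj_eq val_inj) (negbTE hj).
    by [].
  apply: eq_bigr => c _; rewrite mul1r.
  by [].
have -> : \sum_i \sum_c F (i, c) = \sum_i \sum_c F (h (i, c)).
  rewrite !pair_bigA (reindex_inj (inv_inj hK)) /=.
  by apply: eq_bigr => -[i c] _.
apply: eq_bigr => i _; rewrite big_distrl /=.
rewrite (bigD1 p) //=.
apply: eq_bigr => c _; rewrite /F /h /= fupd_at HR /R !mulrA.
by [].
Qed.

Lemma sum_delta (k : fieldType) n d (K : {ffun 'I_d -> 'I_n} -> k) (a : {ffun 'I_d -> 'I_n}) :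
  \sum_i K i * \prod_j (delta_mx (a j) ord0 : 'cV[k]_n) (i j) ord0 = K a.
Proof.
rewrite (bigD1 a) //= [X in _ + X]big1.
  by rewrite addr0 big1 ?mulr1 // => j _; rewrite mxE !eqxx.
move=> i ne.
have [j Hj] : exists j, i j != a j.
  apply/existsP; rewrite -negb_forall; apply: contra ne => /forallP H.
  by apply/eqP/ffunP => j; apply/eqP/H.
by rewrite (bigD1 j) //= mxE (negbTE Hj) mul0r mulr0.
Qed.

Definition ucan (k : fieldType) n d (a : {ffun 'I_d -> 'I_n}) : 'I_d -> 'cV[k]_n :=
  fun j => delta_mx (a j) ord0.

Lemma Cent_K (k : fieldType) n d (f : 'M[k]_n) (p0 p1 : 'I_d) :
  nat_of_ord p0 = 0%N -> nat_of_ord p1 = 1%N ->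
  in_Cent d f <-> forall a, Kc f p0 a = Kc f p1 a.
Proof.
move=> h0 h1; rewrite /in_Cent.
have E u : Theta (app_at f 0 u) = Theta (app_at f p0 u) by rewrite h0.
have E1 u : Theta (app_at f 1 u) = Theta (app_at f p1 u) by rewrite h1.
split.
  by move=> H a; have := H (ucan k a); rewrite E E1 !Theta_app !sum_delta.
by move=> H u; rewrite E E1 !Theta_app; apply: eq_bigr => i _; rewrite H.
Qed.

Lemma Lie_K (k : fieldType) n d (f : 'M[k]_n) :
  in_Lie d f <-> forall a, \sum_(p < d) Kc f p a = 0.
Proof.
rewrite /in_Lie; split.
  move=> H a; have := H (ucan k a).
  under eq_bigr do rewrite Theta_app.
  rewrite exchange_big /= -(sum_delta (fun i => \sum_(p < d) Kc f p i)).
  by under [X in _ -> X = _]eq_bigr do rewrite mulr_suml.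
move=> H u; under eq_bigr do rewrite Theta_app.
rewrite exchange_big /= big1 // => i _; by rewrite -mulr_suml H mul0r.
Qed.

Definition ssum n d (i : {ffun 'I_d -> 'I_n}) : nat := (\sum_(j < d) (i j : nat))%N.

Lemma condtE n d (i : {ffun 'I_d -> 'I_n}) : (0 < d)%N -> (0 < n)%N ->
  condt i = (ssum i == (d - 1) * (n - 1))%N.
Proof.
move=> hd hn; rewrite /condt /ssum.
rewrite (eq_bigr (fun j => i j + 1)%N); last by move=> j _; rewrite addn1.
rewrite big_split /= sum_nat_const card_ord muln1.
set s := (\sum_(j < d) _)%N.
clearbody s; clear i.
case: d hd => // d' _; case: n hn => // n' _.
apply/eqP/eqP; rewrite !subn1 /= mulnS. all: lia.
Qed.

Lemma ssum_fupd n d (i : {ffun 'I_d -> 'I_n}) p c :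
  (ssum (fupd i p c) + i p = ssum i + c)%N.
Proof.
rewrite /ssum (bigD1 p) //= [in RHS](bigD1 p) //= ffunE eqxx.
rewrite (eq_bigr (fun j => i j : nat)); first by rewrite addnAC [in RHS]addnAC [(i p + c)%N]addnC.
by move=> j /negbTE hj; rewrite ffunE hj.
Qed.

Lemma ssum_ge n d (i : {ffun 'I_d -> 'I_n}) p : (i p <= ssum i)%N.
Proof. by rewrite /ssum (bigD1 p) //= leq_addr. Qed.

Lemma ssum_le n d (i : {ffun 'I_d -> 'I_n}) p : (ssum i <= i p + (d - 1) * (n - 1))%N.
Proof.
rewrite /ssum (bigD1 p) //= leq_add2l.
apply: (@leq_trans (\sum_(j < d | j != p) (n - 1))%N).
  by apply: leq_sum => j _; have := ltn_ord (i j); lia.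
rewrite sum_nat_const.
have -> : #|[pred j : 'I_d | j != p]| = d.-1 by rewrite cardC1 card_ord.
by rewrite !subn1.
Qed.

Lemma ssum_fupdE n d (i : {ffun 'I_d -> 'I_n}) p c :
  ssum (fupd i p c) = (ssum i - i p + c)%N.
Proof. have := ssum_fupd i p c; have := ssum_ge i p; lia. Qed.

Lemma KE1 (k : fieldType) n d (f : 'M[k]_n) p (i : {ffun 'I_d -> 'I_n}) (c : 'I_n) :
  (0 < d)%N -> (0 < n)%N ->
  (ssum i - i p + c = (d - 1) * (n - 1))%N -> Kc f p i = f c (i p).
Proof.
move=> hd hn hc; rewrite /Kc (bigD1 c) //= condtE // ssum_fupdE hc eqxx mul1r.
rewrite big1 ?addr0 // => c' hc'; rewrite condtE // ssum_fupdE.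
case: eqP => [h|]; last by rewrite mul0r.
have E : c' = c by apply: val_inj => /=; lia.
by rewrite E eqxx in hc'.
Qed.

Lemma KE0 (k : fieldType) n d (f : 'M[k]_n) p (i : {ffun 'I_d -> 'I_n}) :
  (0 < d)%N -> (0 < n)%N ->
  (forall c : 'I_n, (ssum i - i p + c != (d - 1) * (n - 1))%N) -> Kc f p i = 0.
Proof.
move=> hd hn hc; rewrite /Kc big1 // => c _.
by rewrite condtE // ssum_fupdE (negbTE (hc c)) mul0r.
Qed.

Definition Gv (k : fieldType) n' (f : 'M[k]_n'.+1) (S sg x : nat) : k :=
  if (sg - x <= S)%N then
    if (S - (sg - x) < n'.+1)%N then f (inord (S - (sg - x))) (inord x) else 0
  else 0.

Lemma Kval (k : fieldType) n' d (f : 'M[k]_n'.+1) p (i : {ffun 'I_d -> 'I_n'.+1}) :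
  (0 < d)%N -> Kc f p i = Gv f ((d - 1) * n') (ssum i) (i p).
Proof.
move=> hd; rewrite /Gv.
have hge := ssum_ge i p.
case: ifP => h1; first case: ifP => h2.
- rewrite (@KE1 _ _ _ _ _ _ (inord ((d - 1) * n' - (ssum i - i p)))) //.
    by rewrite inord_val.
  rewrite inordK //; rewrite subn1 /=; lia.
- apply: KE0 => // c; move: (ltn_ord c); rewrite subn1 /=; lia.
- apply: KE0 => // c; rewrite subn1 /=; lia.
Qed.

Lemma Gval1 (k : fieldType) n' (f : 'M[k]_n'.+1) S sg x c :
  (c + sg = S + x)%N -> (x <= sg)%N -> (c < n'.+1)%N -> Gv f S sg x = f (inord c) (inord x).
Proof.
move=> h1 h2 h3; rewrite /Gv.
have -> : (sg - x <= S)%N by lia.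
have -> : (S - (sg - x) = c)%N by lia.
by rewrite h3.
Qed.

Lemma Gval0 (k : fieldType) n' (f : 'M[k]_n'.+1) S sg x :
  (x <= sg)%N -> ((S + x < sg) || (sg + n'.+1 <= S + x))%N -> Gv f S sg x = 0.
Proof.
move=> h1 /orP[] h2; rewrite /Gv.
  by have -> : (sg - x <= S)%N = false by lia.
case: ifP => // h3; by have -> : (S - (sg - x) < n'.+1)%N = false by lia.
Qed.

Definition tup d' m (x y z w : nat) : {ffun 'I_d'.+3 -> 'I_m.+1} :=
  [ffun j : 'I_d'.+3 => inord (if val j == 0%N then x else if val j == 1%N then y
                               else if val j == 2%N then z else w)].

Lemma tup_val d' m x y z w (j : 'I_d'.+3) : (x <= m)%N -> (y <= m)%N -> (z <= m)%N -> (w <= m)%N ->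
  (tup d' m x y z w j : nat) = if val j == 0%N then x else if val j == 1%N then y
                               else if val j == 2%N then z else w.
Proof. by move=> *; rewrite ffunE inordK //; case: ifP => _; [|case: ifP => _; [|case: ifP]]. Qed.

Lemma tup_ssum d' m x y z w : (x <= m)%N -> (y <= m)%N -> (z <= m)%N -> (w <= m)%N ->
  ssum (tup d' m x y z w) = (x + y + z + d' * w)%N.
Proof.
move=> hx hy hz hw; rewrite /ssum !big_ord_recl !tup_val //=.
rewrite (eq_bigr (fun _ => w)); last by move=> j _; rewrite tup_val.
by rewrite sum_nat_const card_ord !addnA mulnC.
Qed.

Lemma tup_sumK (k : fieldType) d' m (f : 'M[k]_m.+1) x y z w :
  (x <= m)%N -> (y <= m)%N -> (z <= m)%N -> (w <= m)%N ->
  \sum_(p < d'.+3) Kc f p (tup d' m x y z w) =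
  let S := ((d'.+3 - 1) * m)%N in let sg := (x + y + z + d' * w)%N in
  Gv f S sg x + Gv f S sg y + Gv f S sg z + Gv f S sg w *+ d'.
Proof.
move=> hx hy hz hw /=.
rewrite !big_ord_recl !Kval // tup_ssum // !tup_val //=.
rewrite (eq_bigr (fun _ => Gv f ((d'.+3 - 1) * m) (x + y + z + d' * w) w)).
  by rewrite sumr_const card_ord !addrA.
by move=> j _; rewrite Kval // tup_ssum // tup_val.
Qed.

Lemma tup_K01 (k : fieldType) d' m (f : 'M[k]_m.+1) x y z w :
  (x <= m)%N -> (y <= m)%N -> (z <= m)%N -> (w <= m)%N ->
  let S := ((d'.+3 - 1) * m)%N in let sg := (x + y + z + d' * w)%N in
  Kc f ord0 (tup d' m x y z w) = Gv f S sg x /\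
  Kc f (inord 1) (tup d' m x y z w) = Gv f S sg y.
Proof.
move=> hx hy hz hw /=; rewrite !Kval // tup_ssum // !tup_val //= inordK //.
Qed.

Lemma char0_mulrn (k : fieldType) (hc : [pchar k] =i pred0) (x : k) n :
  (0 < n)%N -> x *+ n = 0 -> x = 0.
Proof.
move=> hn /eqP; rewrite -mulr_natr mulf_eq0 => /orP[/eqP //|].
by have := (pcharf0P k).1 hc n => ->; case: n hn.
Qed.

Lemma rec_lin (k : fieldType) (h : nat -> k) kap N :
  (forall e, (e < N)%N -> h e.+1 = h e - kap) ->
  forall e, (e <= N)%N -> h e = h 0%N - kap *+ e.
Proof.
move=> H; elim=> [|e IH] he; first by rewrite mulr0n subr0.
by rewrite H // IH 1?ltnW // mulrS; ring.
Qed.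

Lemma lie_core (k : fieldType) (hc : [pchar k] =i pred0) d' N1 (f : 'M[k]_N1.+1) :
  (0 < N1)%N ->
  (forall x y z w, (x <= N1)%N -> (y <= N1)%N -> (z <= N1)%N -> (w <= N1)%N ->
     let S := ((d'.+3 - 1) * N1)%N in let sg := (x + y + z + d' * w)%N in
     Gv f S sg x + Gv f S sg y + Gv f S sg z + Gv f S sg w *+ d' = 0) ->
  (forall j, (j < N1)%N -> f (inord 0) (inord j) = 0) ->
  forall c a, (c <= N1)%N -> (a <= N1)%N -> f (inord c) (inord a) = 0.
Proof.
move=> hN1 H Hphi c a hcN haN.
set S := ((d'.+3 - 1) * N1)%N.
have hS : (S = d' * N1 + N1 + N1)%N by rewrite /S; lia.
case: (leqP c a) => hca.
  set m := (a - c)%N.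
  case: (ltnP m N1) => hm; last first.
    have c0 : c = 0%N by lia.
    have aN : a = N1 by lia.
    rewrite c0 aN.
    have := H N1 N1 N1 N1 (leqnn _) (leqnn _) (leqnn _) (leqnn _).
    rewrite /= -/S (@Gval1 _ _ _ _ _ _ 0); try lia.
    move=> E; apply: (@char0_mulrn _ hc _ d'.+3) => //; rewrite -[RHS]E; ring.
  set N := (N1 - m)%N.
  pose h e := f (inord e) (inord (e + m)).
  have hG e x sg : (e <= N)%N -> x = (e + m)%N -> sg = (S + m)%N -> Gv f S sg x = h e.
    by move=> he -> ->; apply: Gval1; lia.
  have h0 : h 0%N = 0 by rewrite /h add0n; apply: Hphi.
  have hNz : h N = 0.
    have := H m N1 N1 N1 (ltnW hm) (leqnn _) (leqnn _) (leqnn _).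
    rewrite /= -/S (hG 0%N m) ?(hG N N1) //; try lia.
    move=> E; apply: (@char0_mulrn _ hc _ d'.+2) => //; rewrite -[RHS]E h0; ring.
  have hsym e : (e <= N)%N -> h (N - e)%N = - h e.
    move=> he; have := H (e + m)%N (N - e + m)%N N1 N1 ltac:(lia) ltac:(lia) (leqnn _) (leqnn _).
    rewrite /= -/S (hG e (e + m)%N) ?(hG (N - e)%N (N - e + m)%N) ?(hG N N1) //; try lia.
    move=> E; apply/eqP; rewrite -subr_eq0 -[X in _ == X]E hNz; apply/eqP; ring.
  have hrec e : (e < N)%N -> h e.+1 = h e - h (N - 1)%N.
    move=> he; have := H (e.+1 + m)%N (N - e + m)%N (N - 1 + m)%N N1 ltac:(lia) ltac:(lia) ltac:(lia) (leqnn _).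
    rewrite /= -/S (hG e.+1 (e.+1 + m)%N) ?(hG (N - e)%N (N - e + m)%N) ?(hG (N - 1)%N (N - 1 + m)%N) ?(hG N N1) //; try lia.
    rewrite hsym; last by lia.
    move=> E; apply/eqP; rewrite -subr_eq0 -[X in _ == X]E hNz; apply/eqP; ring.
  have hlin := rec_lin hrec.
  have kap0 : h (N - 1)%N = 0.
    apply: (@char0_mulrn _ hc _ N); first by lia.
    by move: hNz; rewrite (hlin N) // h0 sub0r => /eqP; rewrite oppr_eq0 => /eqP.
  have -> : c = (c - 0)%N by rewrite subn0.
  rewrite (_ : a = c + m)%N; last by lia.
  by rewrite subn0 -/(h c) hlin; [rewrite h0 kap0 mul0rn subr0 | lia].
set M := (c - a)%N.
set N := (N1 - M)%N.
pose h e := f (inord (e + M)) (inord e).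
have hG e x : (e <= N)%N -> x = e -> Gv f S (S - M) x = h e.
  by move=> he ->; apply: Gval1; lia.
have hD x : (x <= N1)%N -> (N < x)%N -> Gv f S (S - M) x = 0.
  by move=> h1 h2; apply: Gval0; lia.
have hsym e : (e <= N)%N -> h (N - e)%N = - h e.
  move=> he; have := H e (N - e)%N N1 N1 ltac:(lia) ltac:(lia) (leqnn _) (leqnn _).
  rewrite /= -/S.
  have -> : (e + (N - e) + N1 + d' * N1 = S - M)%N by lia.
  rewrite (hG e e) ?(hG (N - e)%N (N - e)%N) ?(hD N1) //; try lia.
  move=> E; apply/eqP; rewrite -subr_eq0 -[X in _ == X]E; apply/eqP; ring.
set kap := Gv f S (S - M) (N1 - 1)%N.
have hrec e : (e < N)%N -> h e.+1 = h e - kap.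
  move=> he; have := H e.+1 (N - e)%N (N1 - 1)%N N1 ltac:(lia) ltac:(lia) ltac:(lia) (leqnn _).
  rewrite /= -/S.
  have -> : (e.+1 + (N - e) + (N1 - 1) + d' * N1 = S - M)%N by lia.
  rewrite (hG e.+1 e.+1) ?(hG (N - e)%N (N - e)%N) ?(hD N1) //; try lia.
  rewrite -/kap hsym; last by lia.
  move=> E; apply/eqP; rewrite -subr_eq0 -[X in _ == X]E; apply/eqP; ring.
have hlin := rec_lin hrec.
have hP0 : h 0%N + h N = 0.
  by have := hsym 0%N (leq0n _); rewrite subn0 => ->; rewrite subrr.
have kap0 : kap = 0.
  case: (ltnP 1 M) => hM.
    by rewrite /kap hD //; lia.
  have hN : kap = h N by rewrite /kap (hG N (N1 - 1)%N) //; lia.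
  move: hP0; rewrite (hlin N) // => E.
  have e1 : h 0%N = kap *+ N.+1.
    by rewrite mulrS {1}hN (hlin N) //; ring.
  apply: (@char0_mulrn _ hc _ N.+2) => //.
  by rewrite -[RHS]E e1; ring.
have h00 : h 0%N = 0.
  apply: (@char0_mulrn _ hc _ 2) => //.
  by rewrite -[RHS]hP0 (hlin N) // kap0 mul0rn subr0 mulr2n.
rewrite (_ : c = a + M)%N; last by lia.
by rewrite -/(h a) hlin ?h00 ?kap0 ?mul0rn ?subr0 //; lia.
Qed.

Definition PsiF (k : fieldType) n d (f : 'M[k]_n) : 'rV[k]_#|{: {ffun 'I_d -> 'I_n}}| :=
  \row_j \sum_(p < d) Kc f p (enum_val j).

Lemma Kc_lin (k : fieldType) n d p i (a : k) (f g : 'M[k]_n) :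
  @Kc k n d (a *: f + g) p i = a * Kc f p i + Kc g p i.
Proof.
rewrite /Kc mulr_sumr -big_split /=; apply: eq_bigr => c _.
by rewrite !mxE; ring.
Qed.

Lemma PsiF_lin (k : fieldType) n d : linear (@PsiF k n d).
Proof.
move=> a f g; apply/matrixP => i j; rewrite !mxE mulr_sumr -big_split /=.
by apply: eq_bigr => p _; rewrite Kc_lin.
Qed.

HB.instance Definition _ (k : fieldType) n d :=
  GRing.isLinear.Build k 'M[k]_n 'rV[k]_#|{: {ffun 'I_d -> 'I_n}}| *:%R (@PsiF k n d) (@PsiF_lin k n d).

Definition phiF (k : fieldType) m (f : 'M[k]_m.+1) : 'rV[k]_m :=
  \row_(j < m) f ord0 (widen_ord (leqnSn m) j).

Lemma phiF_lin (k : fieldType) m : linear (@phiF k m).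
Proof. by move=> a f g; apply/matrixP => i j; rewrite !mxE. Qed.

HB.instance Definition _ (k : fieldType) m :=
  GRing.isLinear.Build k 'M[k]_m.+1 'rV[k]_m *:%R (@phiF k m) (@phiF_lin k m).

Definition Emx (k : fieldType) n (j : 'I_n) : 'M[k]_n :=
  \matrix_(b, a) ((a == b + j :> nat)%N)%:R.

Definition Etup (k : fieldType) n : n.-tuple 'M[k]_n := [tuple Emx k j | j < n].

Lemma sumE (k : fieldType) N1 (t : 'I_N1.+1 -> k) (b a : 'I_N1.+1) :
  (\sum_j t j *: Emx k j) b a = if (b <= a)%N then t (inord (a - b)) else 0.
Proof.
rewrite summxE; under eq_bigr do rewrite !mxE.
case: leqP => hba.
  rewrite (bigD1 (inord (a - b))) //= inordK; last by have := ltn_ord a; lia.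
  rewrite (_ : (a == b + (a - b) :> nat)%N) ?mulr1; last by apply/eqP; lia.
  rewrite big1 ?addr0 // => j hj.
  case: eqP => [h|]; last by rewrite mulr0.
  have E : j = inord (a - b).
    apply: val_inj; rewrite /= inordK; last by have := ltn_ord a; lia.
    by lia.
  by rewrite E eqxx in hj.
by rewrite big1 // => j _; case: eqP => [h|]; [lia | rewrite mulr0].
Qed.

Definition Tp (k : fieldType) N1 (f : 'M[k]_N1.+1) := forall c a : nat,
  (c <= N1)%N -> (a <= N1)%N ->
  f (inord c) (inord a) = if (c <= a)%N then f (inord 0) (inord (a - c)) else 0.

Lemma nthE (k : fieldType) n (j : 'I_n) : (Etup k n)`_j = Emx k j.
Proof. by rewrite /Etup nth_mktuple. Qed.

Lemma span_Tp (k : fieldType) N1 (f : 'M[k]_N1.+1) :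
  f \in <<Etup k N1.+1>>%VS <-> Tp f.
Proof.
split.
  move/coord_span => -> c a hc ha.
  under eq_bigr do rewrite nthE.
  rewrite !sumE !inordK //; try lia.
  by case: leqP => // _; rewrite subn0.
move=> T.
have -> : f = \sum_j f ord0 j *: Emx k j.
  apply/matrixP => b a; rewrite sumE; have hb := ltn_ord b; have ha := ltn_ord a.
  rewrite -(inord_val b) -(inord_val a) T; try lia.
  rewrite !inordK; try lia.
  by case: leqP => // _; congr (f _ _); apply: val_inj; rewrite /= !inordK //; lia.
apply: memv_suml => j _; apply: memvZ; rewrite -nthE; apply: memv_span.
by apply: mem_nth; rewrite size_tuple.
Qed.

Lemma Etup_free (k : fieldType) N1 : free (Etup k N1.+1).
Proof.
apply/freeP => t ht i.
have := congr1 (fun M : 'M[k]_N1.+1 => M ord0 i) ht.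
under eq_bigr do rewrite nthE.
rewrite sumE mxE /= subn0 => <-.
by congr t; apply: val_inj; rewrite /= inordK.
Qed.

Lemma dim_Etup (k : fieldType) N1 : \dim <<Etup k N1.+1>> = N1.+1.
Proof. by have /eqP := Etup_free k N1; rewrite size_tuple. Qed.

Lemma cent_core (k : fieldType) d' N1 (f : 'M[k]_N1.+1) :
  (forall x y z w, (x <= N1)%N -> (y <= N1)%N -> (z <= N1)%N -> (w <= N1)%N ->
     let S := ((d'.+3 - 1) * N1)%N in let sg := (x + y + z + d' * w)%N in
     Gv f S sg x = Gv f S sg y) -> Tp f.
Proof.
move=> H.
set S := ((d'.+3 - 1) * N1)%N.
have hS : (S = d' * N1 + N1 + N1)%N by rewrite /S; lia.
have key b x : (b <= N1)%N -> (x <= N1)%N ->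
    f (inord b) (inord x) = if (b <= x)%N then f (inord (N1 + b - x)) (inord N1) else 0.
  move=> hb hx; have := H x N1 (N1 - b)%N N1 hx (leqnn _) ltac:(lia) (leqnn _).
  rewrite /= -/S (@Gval1 _ _ _ _ _ _ b); try lia.
  case: leqP => hbx.
    rewrite (@Gval1 _ _ _ _ _ _ (N1 + b - x)) //; lia.
  rewrite Gval0 //; lia.
move=> c a hc ha; rewrite key //.
case: leqP => // hca.
rewrite [RHS]key; try lia.
rewrite (_ : (0 <= a - c)%N = true) //.
by congr (f (inord _) _); lia.
Qed.

Lemma GT (k : fieldType) N1 (f : 'M[k]_N1.+1) S sg x :
  Tp f -> (x <= sg)%N -> (sg - x <= S)%N -> (x <= N1)%N ->
  Gv f S sg x = if (S <= sg)%N then f (inord 0) (inord (sg - S)) else 0.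
Proof.
move=> T h1 h2 h3; rewrite /Gv h2.
case: ifP => h4.
  rewrite T //; try lia.
  case: leqP => h5; case: leqP => h6 //; try lia.
  by congr (f _ (inord _)); lia.
by case: leqP => //; lia.
Qed.

Unset Implicit Arguments.
Set Strict Implicit.

Theorem lemma3p6 (k : closedFieldType) (hchar : [pchar k] =i pred0)
    (n d : nat) (hd : (3 <= d)%N) (hn : (2 <= n)%N) :
  exists (C L : {vspace 'M[k]_n}),
    (forall f, f \in C <-> in_Cent d f) /\
    (forall f, f \in L <-> in_Lie d f) /\
    (\dim L < \dim C)%N /\ \dim C = n.
Proof.
case: n hn => [|[|n']] // _; case: d hd => [|[|[|d']]] // _.
set N1 := n'.+1.
have hS : ((d'.+3 - 1) * (n'.+2 - 1) = (d'.+3 - 1) * N1)%N by [].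
have p1v : nat_of_ord (inord 1 : 'I_d'.+3) = 1%N by rewrite inordK.
have LieE (f : 'M[k]_n'.+2) : f \in lker (linfun (@PsiF k n'.+2 d'.+3)) <-> in_Lie d'.+3 f.
  rewrite memv_ker lfunE /= Lie_K; split.
    move=> /eqP H a; have := congr1 (fun M : 'rV[k]_#|{: {ffun 'I_d'.+3 -> 'I_n'.+2}}| => M ord0 (enum_rank a)) H.
    by rewrite !mxE enum_rankK.
  by move=> H; apply/eqP/matrixP => i j; rewrite !mxE H.
exists <<Etup k n'.+2>>%VS, (lker (linfun (@PsiF k n'.+2 d'.+3))).
have CentE (f : 'M[k]_n'.+2) : f \in <<Etup k n'.+2>>%VS <-> in_Cent d'.+3 f.
  rewrite span_Tp (Cent_K _ (p0 := ord0) (p1 := inord 1)) //; split.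
    move=> T a; rewrite !Kval //.
    have := ssum_ge a ord0; have := ssum_le a ord0.
    have := ssum_ge a (inord 1); have := ssum_le a (inord 1).
    have := ltn_ord (a ord0); have := ltn_ord (a (inord 1)).
    rewrite hS => *.
    by rewrite (GT T) 1?(GT T) //; lia.
  move=> H; apply: (@cent_core _ d') => x y z w hx hy hz hw /=.
  by have [<- <-] := @tup_K01 _ d' _ f x y z w hx hy hz hw; apply: H.
split => //; split => //; split; last by rewrite dim_Etup.
rewrite dim_Etup.
set L := lker _.
have H0 : (L :&: lker (linfun (@phiF k n'.+1)))%VS = 0%VS.
  apply/eqP; rewrite -subv0; apply/subvP => f.
  rewrite memv_cap memv_ker lfunE /= memv0 => /andP[/LieE hL /eqP hphi].
  have HL := (@Lie_K _ _ d'.+3 f).1 hL.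
  have Hphi j : (j < N1)%N -> f (inord 0) (inord j) = 0.
    move=> hj; have := congr1 (fun M : 'rV[k]_N1 => M ord0 (Ordinal hj)) hphi.
    rewrite !mxE => <-; congr (f _ _); apply: val_inj; rewrite /= inordK //; lia.
  have Hc := @lie_core _ hchar d' N1 f isT.
  have HG : forall x y z w, (x <= N1)%N -> (y <= N1)%N -> (z <= N1)%N -> (w <= N1)%N ->
     let S := ((d'.+3 - 1) * N1)%N in let sg := (x + y + z + d' * w)%N in
     Gv f S sg x + Gv f S sg y + Gv f S sg z + Gv f S sg w *+ d' = 0.
    move=> x y z w hx hy hz hw.
    have := HL (tup d' N1 x y z w); rewrite tup_sumK // => E; exact: E.
  have Z := Hc HG Hphi.
  apply/eqP/matrixP => i j; rewrite mxE -(inord_val i) -(inord_val j) Z //.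
    by have := ltn_ord i.
  by have := ltn_ord j.
rewrite -(limg_dim_eq H0).
apply: (leq_ltn_trans (dimvS (subvf _))).
by rewrite dimvf dim_matrix mul1r.
Qed.
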